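(* Let $(\mathcal{X},\rho)$ be a metric space and let $\mu_s,\mu_t$ be Borel probability measures on $\mathcal{X}$ with finite first moment. Let $H$ be a class of functions $h:\mathcal{X}\to[0,1]$, and assume every $h\in H$ is $K$-Lipschitz continuous with respect to $\rho$ for some constant $K$. Then for every $h,h'\in H$, $$\epsilon_t(h,h')\le \epsilon_s(h,h')+2K\,W_1(\mu_s,\mu_t).$$
   Context: For a probability measure $\mu$ on $\mathcal{X}$ and functions $h,h':\mathcal{X}\to[0,1]$, define $\epsilon_\mu(h,h')=\mathbb{E}_{x\sim\mu}[|h(x)-h'(x)|]$; write $\epsilon_s=\epsilon_{\mu_s}$ and $\epsilon_t=\epsilon_{\mu_t}$. The (first) Wasserstein distance is $W_1(\mathbb{P},\mathbb{Q})=\inf_{\gamma\in\Gamma(\mathbb{P},\mathbb{Q})}\int\rho(x,y)\,d\gamma(x,y)$, where $\Gamma(\mathbb{P},\mathbb{Q})$ is the set of couplings of $\mathbb{P}$ and $\mathbb{Q}$; by Kantorovich–Rubinstein duality (for separable $\mathcal{X}$) it equals $\sup_{\|f\|_L\le 1}\mathbb{E}_{\mathbb{P}}[f]-\mathbb{E}_{\mathbb{Q}}[f]$, with $\|f\|_L=\sup_{x\ne y}|f(x)-f(y)|/\rho(x,y)$. *)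

(* Defs.v *)
From HB Require Import structures.
From mathcomp Require Import all_boot all_order all_algebra.
From mathcomp Require Import all_classical all_reals all_analysis.
Set Implicit Arguments. Unset Strict Implicit. Unset Printing Implicit Defensive.
Import Order.TTheory GRing.Theory Num.Theory.
Local Open Scope classical_set_scope.
Local Open Scope ring_scope.

Section Defs.
Context {R : realType} {d : measure_display} {X : measurableType d}.

Definition is_metric (rho : X -> X -> R) : Prop :=
  [/\ forall x y, 0 <= rho x y,
      forall x y, rho x y = 0 <-> x = y,
      forall x y, rho x y = rho y x &
      forall x y z, rho x z <= rho x y + rho y z].

Definition metric_open (rho : X -> X -> R) : set (set X) :=
  [set A | forall x, A x -> exists2 r : R, 0 < r & [set y | rho x y < r] `<=` A].

Definition is_borel (rho : X -> X -> R) : Prop :=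
  (@measurable d X) = <<s metric_open rho >>.

Definition finite_first_moment (rho : X -> X -> R) (mu : probability X R) : Prop :=
  exists x0 : X, (\int[mu]_x (rho x0 x)%:E < +oo)%E.

Definition coupling (P Q : probability X R) : set (probability (X * X)%type R) :=
  [set g | forall A : set X, measurable A ->
       g (A `*` setT) = P A /\ g (setT `*` A) = Q A].

Definition W1 (rho : X -> X -> R) (P Q : probability X R) : \bar R :=
  ereal_inf [set (\int[g]_z (rho z.1 z.2)%:E)%E | g in coupling P Q].

Definition eps (mu : probability X R) (h h' : X -> R) : \bar R :=
  (\int[mu]_x `|h x - h' x|%:E)%E.

End Defs.

(* Main.v *)
Require Import Defs.
From mathcomp Require Import all_boot all_order all_algebra.
From mathcomp Require Import all_classical all_reals all_analysis.
From mathcomp Require Import measurable_realfun.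
From mathcomp Require Import lra ring.
Import Order.TTheory GRing.Theory Num.Theory.
Local Open Scope classical_set_scope.
Local Open Scope ring_scope.

Section Helpers.
Context {R : realType} {d : measure_display} {T : measurableType d}.

Lemma le_integral_nm (mu : measure T R) (f g : T -> \bar R) :
  (forall x, (0 <= f x)%E) -> (forall x, (f x <= g x)%E) ->
  (\int[mu]_x f x <= \int[mu]_x g x)%E.
Proof.
move=> f0 fg.
have g0 : forall x, (0 <= g x)%E by move=> x; exact: le_trans (f0 x) (fg x).
rewrite (ge0_integralTE _ f0) (ge0_integralTE _ g0).
apply: ereal_sup_le => _ [h hf <-]; exists h => // x.
exact: le_trans (hf x) (fg x).
Qed.

Lemma lip_measurable (rho : T -> T -> R) (h : T -> R) (K : R) :
  is_borel rho -> 0 < K -> (forall x y, `|h x - h y| <= K * rho x y) ->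
  measurable_fun setT h.
Proof.
move=> bor K0 hl.
have mE : @measurable _ R = <<s @RGenOInfty.G R >> by exact: RGenOInfty.measurableE.
apply: (@measurability _ _ T R setT h _ mE).
move=> _ [_ [a ->] <-].
rewrite bor; apply: sub_sigma_algebra => x [_ /=]; rewrite in_itv /= andbT => hx.
exists ((h x - a) / K); first by rewrite divr_gt0 // subr_gt0.
move=> y /= rxy; split => //=; rewrite in_itv /= andbT.
have e : K * ((h x - a) / K) = h x - a by rewrite mulrC divfK // gt_eqF.
have : K * rho x y < K * ((h x - a) / K) by rewrite ltr_pM2l.
rewrite e => H1.
have := hl x y; have := ler_norm (h x - h y); lra.
Qed.

Lemma marg_fst (X : measurableType d) (P : probability X R) (g : probability (X * X)%type R)
  (f : X -> R) : measurable_fun setT f -> (forall x, 0 <= f x) ->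
  (forall A, measurable A -> g (A `*` setT) = P A) ->
  (\int[g]_z (f z.1)%:E = \int[P]_x (f x)%:E)%E.
Proof.
move=> mf f0 hg.
transitivity (\int[pushforward g fst]_x (f x)%:E)%E.
  rewrite ge0_integral_pushforward //=.
  all: try exact/measurable_EFinP.
  all: try exact: measurable_fst.
  all: try (by move=> x _; rewrite lee_fin).
apply: eq_measure_integral => A mA _; change (g (fst @^-1` A) = P A); rewrite -hg //.
by congr (g _); apply/seteqP; split => z /=; [move=> ?; split|case].
Qed.

Lemma marg_snd (X : measurableType d) (P : probability X R) (g : probability (X * X)%type R)
  (f : X -> R) : measurable_fun setT f -> (forall x, 0 <= f x) ->
  (forall A, measurable A -> g (setT `*` A) = P A) ->
  (\int[g]_z (f z.2)%:E = \int[P]_x (f x)%:E)%E.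
Proof.
move=> mf f0 hg.
transitivity (\int[pushforward g snd]_x (f x)%:E)%E.
  rewrite ge0_integral_pushforward //=.
  all: try exact/measurable_EFinP.
  all: try exact: measurable_snd.
  all: try (by move=> x _; rewrite lee_fin).
apply: eq_measure_integral => A mA _; change (g (snd @^-1` A) = P A); rewrite -hg //.
by congr (g _); apply/seteqP; split => z /=; [move=> ?; split|case].
Qed.

End Helpers.

Theorem lemma1 (R : realType) (d : measure_display) (X : measurableType d)
  (rho : X -> X -> R) (mu_s mu_t : probability X R)
  (H : set (X -> R)) (K : R) :
  is_metric rho -> is_borel rho ->
  finite_first_moment rho mu_s -> finite_first_moment rho mu_t ->
  (forall h, H h -> forall x, 0 <= h x <= 1) ->
  (forall h, H h -> forall x y, `|h x - h y| <= K * rho x y) ->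
  forall h h', H h -> H h' ->
  (eps mu_t h h' <= eps mu_s h h' + (2 * K)%:E * W1 rho mu_s mu_t)%E.
Proof.
move=> met bor fms fmt h01 hlip h h' Hh Hh'.
case: met => rho0 rhoeq rhosym rhotri.
pose f (x : X) : R := `|h x - h' x|.
have flip x y : `|f x - f y| <= 2 * K * rho x y.
  rewrite /f; apply: le_trans (ler_dist_dist _ _) _.
  have := hlip _ Hh x y; have := hlip _ Hh' x y.
  rewrite (_ : h x - h' x - (h y - h' y) = (h x - h y) - (h' x - h' y)); last by ring.
  have := ler_normB (h x - h y) (h' x - h' y); lra.
have f01 x : 0 <= f x <= 1.
  rewrite normr_ge0 /= ler_norml; have := h01 _ Hh x; have := h01 _ Hh' x.
  move=> /andP[? ?] /andP[? ?]; apply/andP; split; lra.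
have f0 x : 0 <= f x by have /andP[] := f01 x.
have epsE (mu : probability X R) : eps mu h h' = (\int[mu]_x (f x)%:E)%E by [].
have [x0 _] : exists x0 : X, True.
  apply: contrapT => nx.
  have e : [set: X] = set0 by apply/seteqP; split => x // _; apply: nx; exists x.
  have := probability_setT mu_s; rewrite e measure0 => -[] /esym/eqP.
  by rewrite oner_eq0.
case: (leP K 0) => [K0 | K0].
- have fc x : f x = f x0.
    have := flip x x0; have := rho0 x x0.
    have : K * rho x x0 <= 0 by rewrite mulr_le0_ge0.
    have := ler_norm (f x - f x0); have := ler_norm (f x0 - f x).
    rewrite distrC -mulrA => ? ? ? ? ?.
    apply/eqP; rewrite eq_le; apply/andP; split; lra.
  have eE (mu : probability X R) : eps mu h h' = (f x0)%:E.
    rewrite epsE; under eq_integral do rewrite fc.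
    rewrite integral_cst //; transitivity ((f x0)%:E * 1)%E; last exact: mule1.
    by congr (_ * _)%E; exact: probability_setT.
  rewrite !eE.
  suff -> : ((2 * K)%:E * W1 rho mu_s mu_t = 0)%E by rewrite adde0.
  case: (eqVneq K 0) => [->|Kn0]; first by rewrite mulr0 mul0e.
  have Kn : K < 0 by rewrite lt_neqAle Kn0.
  have sub (x y : X) : x = y.
    apply: (rhoeq x y).1; have := hlip _ Hh x y; have := rho0 x y.
    have := normr_ge0 (h x - h y) => ? ? ?.
    apply/eqP; rewrite eq_le; apply/andP; split; nra.
  suff -> : W1 rho mu_s mu_t = 0%E by rewrite mule0.
  apply/eqP; rewrite eq_le; apply/andP; split.
  + apply: ge_ereal_inf.
    exists (\int[\d_(x0, x0)]_z (rho z.1 z.2)%:E)%E.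
      exists (\d_(x0, x0)) => //.
      move=> A mA.
      have [Ax0|nAx0] := pselect (A x0).
        have -> : A = setT by apply/seteqP; split => // x _; rewrite (sub x x0).
        by rewrite setXTT !probability_setT.
      have -> : A = set0 by apply/seteqP; split => // x; rewrite (sub x x0).
      by rewrite setX0 set0X !measure0.
    rewrite integral0_eq // => z _.
    by rewrite (sub z.1 z.2) (rhoeq _ _).2.
  + apply: le_ereal_inf_tmp => _ [g _ <-]; apply: integral_ge0 => z _.
    by rewrite lee_fin.
- have mh := @lip_measurable _ _ _ rho h K bor K0 (hlip _ Hh).
  have mh' := @lip_measurable _ _ _ rho h' K bor K0 (hlip _ Hh').
  have mf : measurable_fun setT f.
    apply: measurableT_comp; [exact: normr_measurable | exact: measurable_funB].
  have efin (mu : probability X R) : eps mu h h' \is a fin_num.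
    rewrite epsE ge0_fin_numE ?integral_ge0 //; last by move=> x _; rewrite lee_fin.
    apply: (@le_lt_trans _ _ (\int[mu]_x (cst 1%E) x)%E).
      apply: le_integral_nm => x; rewrite lee_fin //.
      by have /andP[] := f01 x.
    rewrite integral_cst // mul1e.
    apply: (@le_lt_trans _ _ 1%E); last exact: ltry.
    by rewrite le_eqVlt; apply/orP; left; apply/eqP; exact: probability_setT.
  have key g : coupling mu_s mu_t g ->
      (eps mu_t h h' <= eps mu_s h h' + (2 * K)%:E * \int[g]_z (rho z.1 z.2)%:E)%E.
    move=> cg.
    have E1 : (\int[g]_z (f z.1)%:E = eps mu_s h h')%E.
      by apply: marg_fst => // A mA; have [] := cg A mA.
    have E2 : (\int[g]_z (f z.2)%:E = eps mu_t h h')%E.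
      by apply: marg_snd => // A mA; have [] := cg A mA.
    pose v (z : X * X) := (Order.max 0 (f z.2 - f z.1)) * (2 * K)^-1.
    have K2 : 0 < 2 * K by rewrite mulr_gt0.
    have mv : measurable_fun setT v.
      apply: measurable_funM; last exact: measurable_cst.
      apply: measurable_maxr; first exact: measurable_cst.
      apply: measurable_funB.
        exact: measurableT_comp mf measurable_snd.
      exact: measurableT_comp mf measurable_fst.
    have v0 z : 0 <= v z.
      by apply: mulr_ge0; [rewrite le_max lexx | rewrite invr_ge0 ltW].
    have fv z : f z.2 <= f z.1 + 2 * K * v z.
      rewrite /v [2 * K * _]mulrC divfK ?gt_eqF //.
      have : f z.2 - f z.1 <= Order.max 0 (f z.2 - f z.1) by rewrite le_max lexx orbT.
      lra.
    have vr z : v z <= rho z.1 z.2.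
      rewrite /v ler_pdivrMr // ge_max; apply/andP; split.
        by rewrite mulr_ge0 // ltW.
      have := flip z.2 z.1; rewrite rhosym; have := ler_norm (f z.2 - f z.1).
      move=> ? ?; nra.
    rewrite -E1 -E2.
    apply: (@le_trans _ _ (\int[g]_z ((f z.1)%:E + (2 * K)%:E * (v z)%:E))%E).
      apply: ge0_le_integral => //.
      - by move=> z _; rewrite lee_fin.
      - apply/measurable_EFinP; exact: (measurableT_comp mf measurable_snd).
      - change (measurable_fun setT (EFin \o (fun z => f z.1 + 2 * K * v z))).
        apply/measurable_EFinP; apply: measurable_funD.
          exact: (measurableT_comp mf measurable_fst).
        by apply: measurable_funM => //; exact: measurable_cst.
      - by move=> z _; rewrite -EFinM -EFinD lee_fin.
    rewrite ge0_integralD //.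
    - rewrite ge0_integralZl_EFin //; try (by move=> z _; rewrite lee_fin);
        try (by apply/measurable_EFinP); try (by apply: ltW).
      apply: leeD; first exact: lexx.
      apply: lee_wpmul2l; first by rewrite lee_fin ltW.
      by apply: le_integral_nm => z; rewrite lee_fin.
    - by move=> z _; rewrite lee_fin.
    - apply/measurable_EFinP; exact: (measurableT_comp mf measurable_fst).
    - by move=> z _; rewrite -EFinM lee_fin mulr_ge0 // ltW.
    - change (measurable_fun setT (EFin \o (fun z => 2 * K * v z))).
      by apply/measurable_EFinP; apply: measurable_funM => //; exact: measurable_cst.
  have [a_s esE] : exists a, eps mu_s h h' = a%:E.
    by exists (fine (eps mu_s h h')); rewrite fineK.
  have [a_t etE] : exists a, eps mu_t h h' = a%:E.
    by exists (fine (eps mu_t h h')); rewrite fineK.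
  have K2 : 0 < 2 * K by rewrite mulr_gt0.
  have cle : (((a_t - a_s) / (2 * K))%:E <= W1 rho mu_s mu_t)%E.
    apply: le_ereal_inf_tmp => _ [g cg <-].
    have := key g cg; rewrite esE etE.
    have ig0 : (0 <= \int[g]_z (rho z.1 z.2)%:E)%E.
      by apply: integral_ge0 => z _; rewrite lee_fin.
    move: ig0; set I := (\int[g]_z _)%E; case: I => [r||] //= ig0; last by rewrite leey.
    rewrite -EFinM -EFinD !lee_fin => hr.
    rewrite mulrC ler_pdivrMl //; lra.
  rewrite esE etE.
  move: cle; case: (W1 rho mu_s mu_t) => [r||] //= cle.
  - rewrite -EFinM -EFinD lee_fin; rewrite lee_fin mulrC ler_pdivrMl // in cle; lra.
  - by rewrite mulry gtr0_sg // mul1e addey // leey.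
Qed.
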